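(* Let $n \geqslant 14$ be an integer and let $X = \mathrm{A}_n$ or $X = \mathrm{S}_n$. Let $p_{\mathrm{intrans}}(X)$ denote the probability that two elements of $X$, chosen independently and uniformly at random, generate a subgroup contained in some intransitive maximal subgroup of $X$. Then $$p_{\mathrm{intrans}}(X) < \frac{1}{n} + \frac{2.7}{n^2}.$$
   Context: $\mathrm{S}_n$ and $\mathrm{A}_n$ denote the symmetric and alternating groups of degree $n$, acting naturally on $\{1,\dots,n\}$; ''intransitive'' refers to this natural action. *)

(* Defs.v *)
From HB Require Import structures.
From mathcomp Require Import all_boot all_order all_algebra all_fingroup all_solvable.
Set Implicit Arguments. Unset Strict Implicit. Unset Printing Implicit Defensive.
Import GRing.Theory Num.Theory.

Definition intrans_maximal (n : nat) (X M : {set {perm 'I_n}}) : bool :=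
  maximal M X && ~~ [transitive M, on [set: 'I_n] | 'P].

Definition intrans_pairs (n : nat) (X : {set {perm 'I_n}}) :
    {set {perm 'I_n} * {perm 'I_n}} :=
  [set xy in setX X X |
    [exists M : {group {perm 'I_n}},
        intrans_maximal X M && (<<[set xy.1; xy.2]>>%g \subset M)]].

Definition p_intrans (n : nat) (X : {set {perm 'I_n}}) : rat :=
  (#|intrans_pairs X|%:R / (#|X| ^ 2)%:R)%R.

(* Main.v *)
Require Import Defs.
From mathcomp Require Import all_boot all_order all_algebra all_fingroup all_solvable.
From mathcomp Require Import zify lra.
Import Order.TTheory GRing.Theory Num.Theory.

Section Part_ar.
Local Open Scope ring_scope.


Lemma bin_grow k n : (2 <= k)%N -> (k <= 14)%N -> (14 <= n)%N -> ('C(14,k) * n^2 <= 196 * 'C(n,k))%N.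
Proof.
move=> k2 k14; elim: n => [//|n IH]; rewrite leq_eqVlt => /orP[/eqP<-|]; first by lia.
rewrite ltnS => n14; have := IH n14.
have e := mul_bin_down n.+1 k; rewrite /= in e.
move: ('C(14,k)) ('C(n,k)) ('C(n.+1,k)) e => c x y e h.
have hk : (0 < n.+1 - k)%N by lia.
rewrite -(leq_pmul2r hk).
have h2 : (n.+1 * (n.+1 - k) <= n^2)%N by nia.
have h3 := leq_mul (leqnn (c * n.+1)) h2.
have h4 := leq_mul h (leqnn n.+1).
nia.
Qed.

Lemma tail_grow n : (14 <= n)%N -> ('C(14,7) * (n - 12) * n^2 <= 392 * 'C(n,7))%N.
Proof.
elim: n => [//|n IH]; rewrite leq_eqVlt => /orP[/eqP<-|]; first by lia.
rewrite ltnS => n14; have := IH n14.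
have e := mul_bin_down n.+1 7; rewrite /= in e.
move: ('C(14,7)) ('C(n,7)) ('C(n.+1,7)) e => c x y e h.
have hk : (0 < n.+1 - 7)%N by lia.
rewrite -(leq_pmul2r hk).
have h2 : ((n.+1 - 12) * n.+1 * (n.+1 - 7) <= (n - 12) * n^2)%N by nia.
have h3 := leq_mul (leqnn (c * n.+1)) h2.
have h4 := leq_mul h (leqnn n.+1).
nia.
Qed.

End Part_ar.

Section Part_ar2.
Local Open Scope ring_scope.


Lemma frac_le (a b c d : nat) : (0 < b)%N -> (0 < d)%N -> (a * d <= c * b)%N ->
  a%:R / b%:R <= c%:R / d%:R :> rat.
Proof.
move=> b0 d0 h; rewrite ler_pdivrMr ?ltr0n // mulrAC ler_pdivlMr ?ltr0n //.
by rewrite -!natrM ler_nat.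
Qed.

Definition cc (k : nat) : nat := (k`! ^ 2 - (k != 1%N))%N.
Definition TT (n k : nat) : rat :=
  ('C(n,k) * cc k * ((n-k)`!)^2)%:R / ((n`!)^2)%:R.

Lemma bin_gt0' n k : (k <= n)%N -> (0 < 'C(n,k))%N.
Proof. by move=> h; rewrite bin_gt0. Qed.

Lemma TT_eq n k : (k <= n)%N -> TT n k <= (cc k)%:R / ('C(n,k) * (k`! ^ 2))%:R.
Proof.
move=> kn; rewrite /TT; apply: frac_le.
- by rewrite expn_gt0 fact_gt0.
- by rewrite muln_gt0 bin_gt0' // expn_gt0 fact_gt0.
rewrite -(bin_fact kn); lia.
Qed.

Lemma TT_le n k : (k <= n)%N -> TT n k <= 1 / ('C(n,k))%:R.
Proof.
move=> kn; apply: (le_trans (TT_eq _ _ kn)); rewrite -[1 in X in _ <= X]/(1%:R); apply: frac_le.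
- by rewrite muln_gt0 bin_gt0' // expn_gt0 fact_gt0.
- by rewrite bin_gt0'.
by rewrite /cc mul1n mulnC leq_mul2l leq_subr orbT.
Qed.

Lemma TT1 n : (1 <= n)%N -> TT n 1 <= 1 / n%:R.
Proof. by move=> h; have := TT_le _ _ h; rewrite bin1. Qed.

Lemma TT2 n : (2 <= n)%N -> TT n 2 <= 3%:R / (4 * 'C(n,2))%:R.
Proof.
move=> h; apply: (le_trans (TT_eq _ _ h)); apply: frac_le.
- by rewrite muln_gt0 bin_gt0' // expn_gt0 fact_gt0.
- by rewrite muln_gt0 bin_gt0'.
rewrite /cc (_ : 2`! = 2)%N //=; lia.
Qed.

Lemma bin_mono n k : (7 <= k)%N -> (k.*2 <= n)%N -> ('C(n,7) <= 'C(n,k))%N.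
Proof.
elim: k => [//|k IH]; rewrite leq_eqVlt => /orP[/eqP<-//|]; rewrite ltnS => k7 kn.
apply: (leq_trans (IH k7 _)); first by lia.
have e := mul_bin_left n k.
rewrite -(@leq_pmul2l k.+1) // e leq_mul2r; apply/orP; right; lia.
Qed.

Lemma frac_le2 (b c d e : nat) : (0 < b)%N -> (0 < d)%N -> (0 < e)%N -> (d * e ^ 2 <= c * b)%N ->
  1 / b%:R <= (c%:R / d%:R) * (e%:R ^+ 2)^-1 :> rat.
Proof.
move=> b0 d0 e0 h; rewrite -mulrA -invfM -natrX -natrM -[1]/(1%:R); apply: frac_le => //.
- by rewrite muln_gt0 expn_gt0 d0 e0.
by rewrite mul1n.
Qed.

Lemma inv_bin_le n k : (2 <= k)%N -> (k <= 14)%N -> (14 <= n)%N ->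
  1 / ('C(n,k))%:R <= (196%:R / ('C(14,k))%:R) * (n%:R ^+ 2)^-1 :> rat.
Proof.
move=> k2 k14 n14; apply: frac_le2.
- by apply: bin_gt0'; lia.
- by apply: bin_gt0'.
- lia.
by rewrite bin_grow.
Qed.

End Part_ar2.

Section Part_ar3.
Local Open Scope ring_scope.


Lemma frac_le3 (a b c d e : nat) : (0 < b)%N -> (0 < d)%N -> (0 < e)%N -> (a * (d * e ^ 2) <= c * b)%N ->
  a%:R / b%:R <= (c%:R / d%:R) * (e%:R ^+ 2)^-1 :> rat.
Proof.
move=> b0 d0 e0 h; rewrite -mulrA -invfM -natrX -natrM; apply: frac_le => //.
by rewrite muln_gt0 expn_gt0 d0 e0.
Qed.

Lemma split34 (b : nat) : 3%:R / (4 * b)%:R = 3%:R / 4%:R * (1 / b%:R) :> rat.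
Proof. by rewrite mul1r natrM invfM mulrA. Qed.

Lemma natdiv (m x : nat) : (1 / x%:R) *+ m = m%:R / x%:R :> rat.
Proof. by rewrite -mulr_natl mulrA mulr1. Qed.

Lemma tail_bound n : (14 <= n)%N ->
  \sum_(7 <= k < (n./2).+1) TT n k <= (196%:R / ('C(14,7))%:R) * (n%:R ^+ 2)^-1.
Proof.
move=> n14.
have h7 : (7 <= n./2)%N by rewrite geq_half_double.
apply: (le_trans (y := \sum_(7 <= k < (n./2).+1) (1 / ('C(n,7))%:R : rat))).
  apply: ler_sum_nat => k /andP[k7 kh].
  have kn : (k <= n)%N by move: kh; rewrite ltnS geq_half_double; lia.
  apply: (le_trans (TT_le _ _ kn)); rewrite -[1]/(1%:R); apply: frac_le.
  - by rewrite bin_gt0'.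
  - by apply: bin_gt0'; lia.
  by rewrite !mul1n bin_mono // -geq_half_double -ltnS.
rewrite sumr_const_nat natdiv.
apply: frac_le3.
- by apply: bin_gt0'; lia.
- by [].
- lia.
have t := tail_grow n n14.
have hh : (((n./2).+1 - 7).*2 <= n - 12)%N by rewrite -{2}(odd_double_half n); lia.
move: t hh; move: ('C(14,7)) ('C(n,7)) => c x t hh.
have := leq_mul hh (leqnn (c * n ^ 2)).
lia.
Qed.

End Part_ar3.

Section Part_ar4.
Local Open Scope ring_scope.


Definition q (k : nat) : rat := 196%:R / ('C(14,k))%:R.

Lemma qsum : 3%:R / 4%:R * q 2 + q 3 + q 4 + q 5 + q 6 + q 7 < 27%:R / 10%:R.
Proof. rewrite /q. vm_compute. reflexivity. Qed.

Lemma comb (t1 t2 t3 t4 t5 t6 t7 a b c d e f g w K : rat) :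
  t1 <= g -> t2 <= a * w -> t3 <= b * w -> t4 <= c * w -> t5 <= d * w -> t6 <= e * w ->
  t7 <= f * w -> (a + b + c + d + e + f) * w < K * w ->
  t1 + (t2 + (t3 + (t4 + (t5 + (t6 + t7))))) < g + K * w.
Proof.
move=> h1 h2 h3 h4 h5 h6 h7; rewrite !mulrDl.
move: (a * w) (b * w) (c * w) (d * w) (e * w) (f * w) (K * w) h1 h2 h3 h4 h5 h6 h7.
move=> A B C D E F G *; lra.
Qed.

Lemma arith n : (14 <= n)%N ->
  \sum_(k < n.+1 | (0 < k)%N && (k.*2 <= n)%N) TT n k < 1/n%:R + (27%:R/10%:R)/(n%:R^+2).
Proof.
move=> n14; set h := n./2.
have h7 : (7 <= h)%N by rewrite /h geq_half_double.
have -> : \sum_(k < n.+1 | (0 < k)%N && (k.*2 <= n)%N) TT n k = \sum_(1 <= k < h.+1) TT n k.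
  rewrite (big_nat_widen _ _ _ _ _ (_ : h.+1 <= n.+1)%N); last first.
    by rewrite ltnS /h -{2}(odd_double_half n); lia.
  rewrite big_geq_mkord; apply: eq_bigl => k /=.
  by rewrite ltnS geq_half_double andbC.
do 6! (rewrite big_ltn; last lia).
set u := (n%:R ^+ 2)^-1 : rat.
have u0 : 0 < u by rewrite invr_gt0 exprn_gt0 // ltr0n; lia.
have e1 := TT1 n (ltnW (leq_trans (isT : 1 < 14)%N n14)).
have ib k : (2 <= k)%N -> (k <= 14)%N -> 1 / ('C(n,k))%:R <= q k * u.
  by move=> a b; apply: inv_bin_le.
have e2 : TT n 2 <= 3%:R / 4%:R * q 2 * u.
  apply: (le_trans (TT2 _ _)); first lia.
  have p34 : (0 : rat) <= 3%:R / 4%:R by vm_compute.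
  rewrite (split34 ('C(n,2))) -(mulrA (3%:R/4%:R)).
  have H := ler_wpM2l p34 (ib 2%N isT isT). exact H.
have ek k : (3 <= k)%N -> (k <= 7)%N -> TT n k <= q k * u.
  move=> a b; apply: (le_trans (TT_le _ _ _)); first lia.
  by apply: ib; lia.
have et : \sum_(7 <= k < h.+1) TT n k <= q 7 * u := tail_bound n n14.
have hq : (3%:R / 4%:R * q 2 + q 3 + q 4 + q 5 + q 6 + q 7) * u < 27%:R / 10%:R * u.
  rewrite (ltr_pM2r u0); exact: qsum.
have e3 := ek 3%N isT isT; have e4 := ek 4%N isT isT; have e5 := ek 5%N isT isT.
have e6 := ek 6%N isT isT.
have H := comb _ _ _ _ _ _ _ _ _ _ _ _ _ _ _ _ e1 e2 e3 e4 e5 e6 et hq. exact H.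
Qed.

End Part_ar4.

Set Implicit Arguments. Unset Strict Implicit. Unset Printing Implicit Defensive.
Section PartCM.
Local Open Scope group_scope.

Lemma card_bigcup_le (I T : finType) (P : pred I) (F : I -> {set T}) :
  #|\bigcup_(i | P i) F i| <= \sum_(i | P i) #|F i|.
Proof.
elim/big_rec2: _ => [|i m A _ h]; first by rewrite cards0.
rewrite cardsU; apply: leq_trans (leq_subr _ _) _.
by rewrite leq_add2l.
Qed.

Section Count.
Variable n : nat.
Variable G : {group {perm 'I_n}}.

Definition Fam := [set O : {set 'I_n} | (0 < #|O|) && (#|O|.*2 <= n)].
Definition E (O : {set 'I_n}) : {set {perm 'I_n} * {perm 'I_n}} :=
  [set xy in setX G G | [&& xy.1 \in 'N(O | 'P), xy.2 \in 'N(O | 'P) &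
     (#|O| == 1%N) || ((restr_perm O xy.1 != 1) || (restr_perm O xy.2 != 1))]].
Definition K (O : {set 'I_n}) := G :&: [set s | perm_on (~: O) s].

Lemma card_F (O : {set 'I_n}) s :
  #|[set x in G | (x \in 'N(O | 'P)) && (restr_perm O x == s)]| <= #|K O|.
Proof.
set F := [set x in G | _].
have [/set0Pn [x0 Fx0] | /negPn/eqP ->] := boolP (F != set0); last by rewrite cards0.
rewrite -(card_rcoset (K O) x0); apply: subset_leq_card; apply/subsetP => x Fx.
move: Fx0 Fx; rewrite inE => /and3P[Gx0 Nx0 /eqP rx0]; rewrite inE => /and3P[Gx Nx /eqP rx].
rewrite mem_rcoset !inE groupM ?groupV //=.
apply/subsetP => i; rewrite !inE; apply: contraNN => iO.
rewrite permM -(restr_permE Nx iO) rx -rx0 (restr_permE Nx0 iO) -permM mulgV perm1 //.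
Qed.

Lemma card_A (O : {set 'I_n}) :
  #|[set st : {perm 'I_n} * {perm 'I_n} | [&& perm_on O st.1, perm_on O st.2 &
     (#|O| == 1%N) || ((st.1 != 1) || (st.2 != 1))]]| <= cc #|O|.
Proof.
set A := [set st | _].
have sA : A \subset setX [set s | perm_on O s] [set s | perm_on O s].
  by apply/subsetP => st; rewrite !inE => /and3P[-> -> _].
have cP : #|[set s | perm_on O s]| = #|O|`! by rewrite cardsE card_perm.
rewrite /cc; case: eqP => [_|o1] /=.
  by rewrite subn0; apply: leq_trans (subset_leq_card sA) _; rewrite cardsX cP.
have sA' : A \subset setX [set s | perm_on O s] [set s | perm_on O s] :\ (1, 1).
  apply/subsetP => st; rewrite !inE /= => /and3P[-> -> /orP[/eqP//|]].
  by case: st => a b /=; rewrite xpair_eqE negb_and => ->.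
apply: leq_trans (subset_leq_card sA') _.
have e := cardsD1 (1, 1) (setX [set s | perm_on O s] [set s | perm_on O s]).
move: e; rewrite cardsX cP !inE /= !perm_on1 /= => e.
by rewrite expnS expn1 e addKn.
Qed.
Lemma card_E (O : {set 'I_n}) : #|E O| <= cc #|O| * #|K O| ^ 2.
Proof.
set A := [set st : {perm 'I_n} * {perm 'I_n} | [&& perm_on O st.1, perm_on O st.2 &
     (#|O| == 1%N) || ((st.1 != 1) || (st.2 != 1))]].
set F := fun s => [set x in G | (x \in 'N(O | 'P)) && (restr_perm O x == s)].
apply: (@leq_trans (\sum_(st in A) #|F st.1| * #|F st.2|)).
  rewrite -sum1_card (partition_big (fun xy => (restr_perm O xy.1, restr_perm O xy.2)) (mem A)).
    apply: leq_sum => st stA; rewrite sum1dep_card -cardsX; apply: subset_leq_card.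
    apply/subsetP => xy; rewrite !inE => /andP[].
    move=> /and4P[/andP[Gx Gy] Nx Ny _] /eqP <- /=.
    by move: Nx Ny => /= -> ->; rewrite Gx Gy !eqxx.
  move=> xy; rewrite /= inE => /andP[_ /and3P[Nx Ny H]].
  by rewrite inE /= !restr_perm_on.
apply: (@leq_trans (\sum_(st in A) #|K O| ^ 2)).
  apply: leq_sum => st _; rewrite expnS expn1; apply: leq_mul; exact: card_F.
by rewrite sum_nat_const leq_mul2r card_A orbT.
Qed.

Lemma cover (n0 : 0 < n) xy : xy \in intrans_pairs G -> exists2 O, O \in Fam & xy \in E O.
Proof.
rewrite inE => /andP[xyG /existsP[M /andP[/andP[_ ntr] sub]]].
set H := <<[set xy.1; xy.2]>> in sub *.
pose i0 : 'I_n := Ordinal n0.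
have sHM : orbit 'P H i0 \subset orbit 'P M i0 by apply: imsetS.
have nT : orbit 'P H i0 != setT.
  apply: contra ntr => /eqP eT; apply/imsetP; exists i0; first by [].
  by apply/eqP; rewrite eqEsubset subsetT andbT -{1}eT.
have [j [Oj1 Oj2]] : exists j, 0 < #|orbit 'P H j| /\ #|orbit 'P H j|.*2 <= n.
  have [le|gt] := leqP (#|orbit 'P H i0|.*2) n.
    by exists i0; split=> //; apply/card_gt0P; exists i0; exact: orbit_refl.
  have /set0Pn[j jC] : ~: orbit 'P H i0 != set0.
    by apply: contra nT => /eqP e; rewrite -[orbit _ _ _]setCK e setC0.
  exists j; split; first by apply/card_gt0P; exists j; exact: orbit_refl.
  have sub2 : orbit 'P H j \subset ~: orbit 'P H i0.
    apply/subsetP => z zj; rewrite inE (orbit_transl _ zj).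
    by move: jC; rewrite inE.
  have := subset_leq_card sub2; have := cardsC (orbit 'P H i0); rewrite card_ord.
  lia.
exists (orbit 'P H j); first by rewrite inE Oj1 Oj2.
have xH : xy.1 \in H by apply: mem_gen; rewrite !inE eqxx.
have yH : xy.2 \in H by apply: mem_gen; rewrite !inE eqxx orbT.
have aH := acts_orbit 'P j (subsetT H).
have Nx := subsetP aH _ xH; have Ny := subsetP aH _ yH.
rewrite inE xyG Nx Ny /=.
apply/negPn/negP; rewrite !negb_or !negbK => /and3P[n1 /eqP rx /eqP ry].
have jO := orbit_refl 'P H j.
have : j \in 'Fix_('P)(H).
  rewrite afix_gen; apply/afixP => a; rewrite !inE => /orP[] /eqP ->.
    by change (xy.1 j = j); rewrite -(restr_permE Nx jO) rx perm1.
  by change (xy.2 j = j); rewrite -(restr_permE Ny jO) ry perm1.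
by move/orbit1P => e; move: n1; rewrite e cards1.
Qed.

Lemma cardO_lt (O : {set 'I_n}) : #|O| < n.+1.
Proof. by rewrite ltnS; apply: leq_trans (max_card _) _; rewrite card_ord. Qed.

Lemma group_sum (g : nat -> nat) :
  \sum_(O in Fam) g #|O| = \sum_(k < n.+1 | (0 < k) && (k.*2 <= n)) 'C(n, k) * g k.
Proof.
rewrite (partition_big (fun O : {set 'I_n} => (inord #|O| : 'I_n.+1))
   (fun k : 'I_n.+1 => (0 < k) && (k.*2 <= n))); last first.
  by move=> O; rewrite inE => /andP[a b]; rewrite inordK ?cardO_lt ?a.
apply: eq_bigr => k /andP[k0 k2].
rewrite (eq_bigr (fun _ => g k)); last first.
  by move=> O /andP[_ /eqP <-]; rewrite inordK ?cardO_lt.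
rewrite sum_nat_const -[X in 'C(X, _)](card_ord n) -card_draws; congr (_ * _)%N; apply: eq_card => O.
rewrite !inE; apply/andP/eqP => [[_ /eqP <-]|e].
  by rewrite inordK ?cardO_lt.
split; last (apply/eqP/val_inj; rewrite /= inordK e // ltn_ord).
by rewrite inE e k0 k2.
Qed.

Lemma total (n0 : 0 < n)
  (HK : forall O, O \in Fam -> (#|K O| * n`! = (n - #|O|)`! * #|G|)%N) :
  (#|intrans_pairs G| * (n`! ^ 2) <=
  (\sum_(k < n.+1 | (0 < k) && (k.*2 <= n)) 'C(n, k) * (cc k * ((n - k)`! ^ 2))) * #|G| ^ 2)%N.
Proof.
have c1 : #|intrans_pairs G| <= #|\bigcup_(O in Fam) E O|.
  apply: subset_leq_card; apply/subsetP => xy /(cover n0)[O OF xyE].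
  by apply/bigcupP; exists O.
apply: (leq_trans (leq_mul (leq_trans c1 (card_bigcup_le _ _)) (leqnn _))).
rewrite -(group_sum (fun k => (cc k * (n - k)`! ^ 2)%N)) !big_distrl /=; apply: leq_sum => O OF.
apply: (leq_trans (leq_mul (card_E O) (leqnn _))).
by rewrite -mulnA -expnMn HK // expnMn mulnA.
Qed.

End Count.

End PartCM.

Lemma card_Alt_on (T : finType) (A : {set T}) : 1 < #|A| ->
  (2 * #|Alt T :&: [set s | perm_on A s]| = #|A|`!)%N.
Proof.
move=> A2.
have [a [b [aA bA ab]]] : exists a b, [/\ a \in A, b \in A & a != b].
  have /card_gt0P[a aA] : 0 < #|A| by lia.
  have : 0 < #|A :\ a| by rewrite (cardsD1 a A) aA in A2; lia.
  move/card_gt0P => [b]; rewrite !inE => /andP[ba bA].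
  by exists a, b; rewrite eq_sym.
set t := tperm a b.
have tA : perm_on A t.
  apply: subset_trans (tperm_on a b) _; apply/subsetP => x; rewrite !inE.
  by case/orP => /eqP ->.
have ot : odd_perm t by rewrite odd_tperm.
set P := [set s | perm_on A s].
have eP : P :\: Alt T = ((P :&: Alt T) :* t)%g.
  apply/setP => x; rewrite mem_rcoset in_setD [_ \in P :&: _]in_setI !Alt_even !inE !odd_permM odd_permV ot.
  case: (boolP (perm_on A x)) => xA /=.
    by rewrite perm_onM ?perm_onV //= addbT !negbK andbT.
  rewrite andbF; apply/esym/negP => /andP[h _]; move/negP: xA; apply.
  by rewrite -(mulgKV t x) perm_onM.
have cP : #|P| = #|A|`! by rewrite cardsE card_perm.
by rewrite -cP -(cardsID (Alt T) P) eP card_rcoset setIC mul2n addnn.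
Qed.

Lemma cardC_O n (O : {set 'I_n}) : #|~: O| = n - #|O|.
Proof. by have := cardsC O; rewrite card_ord; lia. Qed.

Lemma HK_Sym n (O : {set 'I_n}) :
  (#|K (Sym_group 'I_n) O| * n`! = (n - #|O|)`! * #|Sym_group 'I_n|)%N.
Proof.
rewrite /K /= setTI cardsE card_perm cardC_O.
by rewrite (card_Sym 'I_n) card_ord.
Qed.

Lemma HK_Alt n (O : {set 'I_n}) : (4 <= n)%N -> O \in Fam n ->
  (#|K (Alt_group 'I_n) O| * n`! = (n - #|O|)`! * #|Alt_group 'I_n|)%N.
Proof.
move=> n4; rewrite inE => /andP[_ h].
have h1 := @card_Alt_on _ (~: O).
rewrite cardC_O in h1; have {}h1 := h1 ltac:(lia).
have h2 := card_Alt (T := 'I_n); rewrite card_ord in h2; have {}h2 := h2 ltac:(lia).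
rewrite /K /= -h1 -h2 mulnCA mulnA; reflexivity.
Qed.


Section PartKey.
Local Open Scope ring_scope.


Lemma key n (G : {group {perm 'I_n}}) : (14 <= n)%N ->
  (forall O, O \in Fam n -> (#|K G O| * n`! = (n - #|O|)`! * #|G|)%N) ->
  p_intrans G < 1 / n%:R + (27%:R / 10%:R) / (n%:R ^+ 2) :> rat.
Proof.
move=> n14 HK.
have n0 : (0 < n)%N by lia.
have t := total n0 HK.
rewrite /p_intrans; apply: (le_lt_trans _ (arith n n14)).
have b0 : (0 < #|G| ^ 2)%N by rewrite expn_gt0 cardG_gt0.
have d0 : (0 < n`! ^ 2)%N by rewrite expn_gt0 fact_gt0.
apply: (le_trans (frac_le _ _ _ _ b0 d0 t)).
rewrite natr_sum mulr_suml; apply: ler_sum => k _; rewrite /TT mulnA.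
by [].
Qed.


End PartKey.

Local Open Scope ring_scope.

Theorem lemma2p2 (n : nat) (X : {set {perm 'I_n}}) :
  (14 <= n)%N ->
  X = Alt 'I_n \/ X = Sym 'I_n ->
  p_intrans X < 1 / n%:R + (27%:R / 10%:R) / (n%:R ^+ 2) :> rat.
Proof.
move=> n14 [->|->].
  by apply: (@key n (Alt_group 'I_n)) => // O; apply: HK_Alt; lia.
by apply: (@key n (Sym_group 'I_n)) => // O _; apply: HK_Sym.
Qed.
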